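(* For real $x>0$, $y>0$ with $xy<2\pi$, $$\sum_{n=0}^{\infty} B_n R_n(y)\,x^n=\frac{e^{y}}{x}\Phi(1,2,x^{-1})-y\,\Phi(e^{-xy},1,x^{-1})-\frac{1}{x}\Phi(e^{-xy},2,x^{-1})+x(y+1-e^{y}).$$
   Context: For an integer $n\ge 0$ and complex $y$, $R_n(y)=e^y-1-\frac{y}{1!}-\frac{y^2}{2!}-\dots-\frac{y^n}{n!}=e^y-\sum_{k=0}^n\frac{y^k}{k!}$. $B_n$ are the Bernoulli numbers, defined by $\frac{z}{e^z-1}=\sum_{n\ge0}B_n\frac{z^n}{n!}$ ($|z|<2\pi$). $\Phi(z,s,a)=\sum_{n=0}^{\infty}\frac{z^n}{(n+a)^s}$ is the Lerch transcendent. *)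

(* Defs.v *)
From Stdlib Require Import Reals.
From Coquelicot Require Import Coquelicot.
Open Scope R_scope.

Definition bern_gen (z : R) : R :=
  if Req_EM_T z 0 then 1 else z / (exp z - 1).

(* B_n = n-th derivative at 0 of the generating function, i.e.
   z/(e^z-1) = sum_n B_n z^n / n!. *)
Definition Bernoulli (n : nat) : R := Derive_n bern_gen n 0.

(* R_n(y) = e^y - sum_{k=0}^n y^k / k!  (sum_f_R0 f n has n+1 terms). *)
Definition Rrem (n : nat) (y : R) : R :=
  exp y - sum_f_R0 (fun k => y ^ k / INR (Factorial.fact k)) n.

Definition LerchPhi (z : R) (s : nat) (a : R) : R :=
  Series (fun n => z ^ n / (INR n + a) ^ s).

(* Main.v *)
Require Import Defs.
From Stdlib Require Import Reals Lra Lia.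
From Coquelicot Require Import Coquelicot.
Open Scope R_scope.

Definition ecoef (n:nat) : R := / INR (Factorial.fact (S n)).

Fixpoint Aux (n:nat) : nat -> R := match n with
 | O => fun _ => 1
 | S m => fun k => if Nat.leb k m then Aux m k
                   else - sum_f_R0 (fun j => Aux m j * ecoef (S m - j)) m end.
Definition acoef n := Aux n n.

Lemma Aux_stable m k : (k <= m)%nat -> Aux m k = acoef k.
Proof.
  induction m as [|m IH]; intros Hk.
  - assert (k = 0%nat) by lia. subst. reflexivity.
  - destruct (Nat.eq_dec k (S m)) as [->|Hne]; [reflexivity|].
    simpl. replace (Nat.leb k m) with true by (symmetry; apply Nat.leb_le; lia).
    apply IH; lia.
Qed.

Lemma acoef_S m : acoef (S m) = - sum_f_R0 (fun j => acoef j * ecoef (S m - j)) m.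
Proof.
  change (acoef (S m)) with (if Nat.leb (S m) m then Aux m (S m) else - sum_f_R0 (fun j => Aux m j * ecoef (S m - j)) m). replace (Nat.leb (S m) m) with false by (symmetry; apply Nat.leb_gt; lia).
  f_equal. apply sum_eq. intros i Hi. rewrite Aux_stable; auto.
Qed.

Lemma ecoef_0 : ecoef 0 = 1.
Proof. unfold ecoef. simpl. lra. Qed.

Lemma PS_mult_ae n : PS_mult acoef ecoef n = if Nat.eqb n 0 then 1 else 0.
Proof.
  destruct n as [|m].
  - unfold PS_mult. simpl. rewrite ecoef_0. unfold acoef. simpl. lra.
  - unfold PS_mult. rewrite tech5. rewrite Nat.sub_diag, ecoef_0, acoef_S. simpl Nat.eqb.
    rewrite Rmult_1_r. apply Rplus_opp_r.
Qed.

Lemma ecoef_pos n : 0 < ecoef n.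
Proof. unfold ecoef. apply Rinv_0_lt_compat. apply lt_0_INR. apply Nat.neq_0_lt_0, Factorial.fact_neq_0. Qed.

Lemma ecoef_S n : ecoef (S n) = ecoef n / INR (S (S n)).
Proof.
  unfold ecoef. change (Factorial.fact (S (S n))) with (S (S n) * Factorial.fact (S n))%nat.
  rewrite mult_INR. field. split. apply not_0_INR. apply Factorial.fact_neq_0. apply not_0_INR. lia.
Qed.

Lemma ecoef_le n : ecoef n <= (/2)^n.
Proof.
  induction n as [|n IH].
  - rewrite ecoef_0. simpl. lra.
  - rewrite ecoef_S. simpl pow.
    assert (H2 : 2 <= INR (S (S n))). { rewrite !S_INR. pose proof (pos_INR n). lra. }
    pose proof (ecoef_pos n).
    unfold Rdiv. rewrite Rmult_comm. apply Rmult_le_compat; try lra.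
    + left. apply Rinv_0_lt_compat. lra.
    + apply Rinv_le_contravar; lra.
Qed.

Lemma geom_half m : sum_f_R0 (fun j => (/2)^(S m - j)) m = 1 - (/2)^(S m).
Proof.
  induction m as [|m IH].
  - simpl. lra.
  - rewrite tech5. replace (S (S m) - S m)%nat with 1%nat by lia.
    rewrite (sum_eq _ (fun j => (/2)^(S m - j) * /2)).
    + rewrite <- scal_sum. rewrite IH. simpl. lra.
    + intros i Hi. replace (S (S m) - i)%nat with (S (S m - i)) by lia. simpl. ring.
Qed.

Lemma acoef_crude n : Rabs (acoef n) <= 1.
Proof.
  induction n as [n IH] using (well_founded_induction Wf_nat.lt_wf).
  destruct n as [|m].
  - unfold acoef. simpl. rewrite Rabs_R1. lra.
  - rewrite acoef_S, Rabs_Ropp.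
    eapply Rle_trans. apply sum_f_R0_triangle.
    eapply Rle_trans with (sum_f_R0 (fun j => (/2)^(S m - j)) m).
    + apply sum_Rle. intros j Hj. rewrite Rabs_mult.
      rewrite (Rabs_pos_eq (ecoef _)) by (left; apply ecoef_pos).
      assert (Hj' := IH j ltac:(lia)).
      pose proof (ecoef_pos (S m - j)). pose proof (ecoef_le (S m - j)).
      rewrite <- (Rmult_1_l ((/2)^(S m - j))).
      apply Rmult_le_compat; try lra. apply Rabs_pos.
    + rewrite geom_half. pose proof (pow_lt (/2) (S m)). lra.
Qed.

Lemma cv_ge a r M : (forall n, Rabs (a n * r ^ n) <= M) -> Rbar_le r (CV_radius a).
Proof.
  intros H. apply (proj1 (CV_radius_bounded a)). exists M. exact H.
Qed.

Lemma CV_a_ge1 : Rbar_le 1 (CV_radius acoef).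
Proof.
  apply cv_ge with 1. intros n. rewrite pow1, Rmult_1_r. apply acoef_crude.
Qed.

Lemma CV_e : CV_radius ecoef = p_infty.
Proof.
  apply CV_radius_infinite_DAlembert.
  - intros n. pose proof (ecoef_pos n). lra.
  - apply is_lim_seq_ext with (fun n => / INR (S (S n))).
    + intros n. rewrite ecoef_S. pose proof (ecoef_pos n).
      rewrite Rabs_pos_eq. field. split; [apply not_0_INR; lia|lra].
      left. apply Rdiv_lt_0_compat; [|lra]. apply Rdiv_lt_0_compat; [lra|]. apply lt_0_INR; lia.
    + apply is_lim_seq_ext with (fun n => / INR (n + 2)).
      { intros n. f_equal. f_equal. lia. }
      apply (is_lim_seq_incr_n (fun n => / INR n) 2).
      replace (Finite 0) with (Rbar_inv p_infty) by reflexivity.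
      apply is_lim_seq_inv. apply is_lim_seq_INR. discriminate.
Qed.

Lemma is_pseries_e z : z <> 0 -> is_pseries ecoef z (/z * (exp z - 1)).
Proof.
  intros Hz. pose proof (is_exp_Reals z) as H.
  apply (is_pseries_decr_1 _ _ (/z)) in H.
  - unfold PS_decr_1 in H. simpl in H. rewrite Rinv_1 in H. exact H.
  - simpl. change (/z * z = 1). field. exact Hz.
Qed.

Lemma is_series_zero : is_series (fun _ : nat => 0) 0.
Proof.
  unfold is_series. apply filterlim_ext with (fun _ => 0).
  - intros n. rewrite sum_n_Reals. induction n; simpl; [ | rewrite <- IHn]; unfold zero; simpl; ring.
  - apply filterlim_const.
Qed.

Lemma is_pseries_delta z : is_pseries (fun n => if Nat.eqb n 0 then 1 else 0) z 1.
Proof.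
  apply is_pseries_R. apply is_series_decr_1.
  apply is_series_ext with (fun _ => 0).
  - intros n. simpl. ring.
  - simpl. match goal with |- is_series _ ?l => replace l with 0 end.
    + apply is_series_zero.
    + change (0 = 1 + - (1 * 1)). ring.
Qed.

Lemma G1 z : Rbar_lt (Rabs z) (CV_radius acoef) -> bern_gen z = PSeries acoef z.
Proof.
  intros Hz. unfold bern_gen. destruct (Req_EM_T z 0) as [->|Hz0].
  - rewrite PSeries_0. reflexivity.
  - assert (He : Rbar_lt (Rabs z) (CV_radius ecoef)) by (rewrite CV_e; exact I).
    pose proof (is_pseries_mult _ _ _ _ _ (PSeries_correct _ _ (CV_radius_inside _ _ Hz))
         (is_pseries_e z Hz0) Hz He) as H.
    apply is_pseries_ext with (b := fun n => if Nat.eqb n 0 then 1 else 0) in H.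
    2:{ intros n. apply PS_mult_ae. }
    assert (E : 1 = PSeries acoef z * (/z * (exp z - 1))).
    { rewrite <- (is_pseries_unique _ _ _ H). symmetry. apply is_pseries_unique, is_pseries_delta. }
    clear H. rename E into H.
    assert (Hexp : exp z - 1 <> 0).
    { intro E. rewrite E in H. lra. }
    transitivity (PSeries acoef z * (/ z * (exp z - 1)) * (z / (exp z - 1))).
    + rewrite <- H. ring.
    + field. split; assumption.
Qed.

Lemma locally_R (c r : R) (P : R -> Prop) : 0 < r -> (forall t, Rabs (t - c) < r -> P t) -> locally c P.
Proof.
  intros Hr H. exists (mkposreal r Hr). intros t Ht. apply H. exact Ht.
Qed.

Lemma rad_lt a (r : R) z : Rbar_le r (CV_radius a) -> Rabs z < r -> Rbar_lt (Rabs z) (CV_radius a).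
Proof. intros H1 H2. eapply Rbar_lt_le_trans; [|exact H1]. exact H2. Qed.

Lemma Bernoulli_a n : Bernoulli n = INR (Factorial.fact n) * acoef n.
Proof.
  unfold Bernoulli.
  rewrite (Derive_n_ext_loc _ (PSeries acoef)).
  - rewrite Derive_n_PSeries.
    + rewrite PSeries_0. unfold PS_derive_n. simpl. field.
    + rewrite Rabs_R0. eapply Rbar_lt_le_trans; [|exact CV_a_ge1]. simpl; lra.
  - apply locally_R with 1; [lra|]. intros t Ht. apply G1.
    eapply rad_lt. exact CV_a_ge1. rewrite Rminus_0_r in Ht. exact Ht.
Qed.

Lemma is_series_plus_R (a b : nat -> R) la lb : is_series a la -> is_series b lb -> is_series (fun n => a n + b n) (la + lb).
Proof. intros. apply (is_series_plus a b la lb); assumption. Qed.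
Lemma is_series_scal_R c (a : nat -> R) l : is_series a l -> is_series (fun n => c * a n) (c * l).
Proof. intros. apply (is_series_scal c a l); assumption. Qed.
Lemma is_series_minus_R (a b : nat -> R) la lb : is_series a la -> is_series b lb -> is_series (fun n => a n - b n) (la - lb).
Proof. intros. apply (is_series_minus a b la lb); assumption. Qed.
Lemma is_series_incr_1_R (a : nat -> R) (l : R) : is_series a l -> is_series (fun n => a (S n)) (l - a 0%nat).
Proof. intros H. apply is_series_incr_1. match goal with |- is_series _ ?v => replace v with l end. exact H. change (l = l - a 0%nat + a 0%nat). ring. Qed.


Fixpoint pp (s:R) (n:nat) : nat -> R := match n with
 | O => fun j => if Nat.eqb j 1 then 1 else 0
 | S m => fun j => (INR (S j) * pp s m (S j) + s * (INR (j - 1) * pp s m (j - 1))) / 2 end.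

Lemma pp_supp s n j : (S n < j)%nat -> pp s n j = 0.
Proof.
  revert j; induction n as [|n IH]; intros j Hj.
  - simpl. destruct (Nat.eqb_spec j 1); [lia|reflexivity].
  - simpl. rewrite (IH (S j)) by lia. rewrite (IH (j-1)%nat) by lia. lra.
Qed.

Lemma F1 q X N : sum_f_R0 (fun i => INR (S i) * q (S i) * X ^ i) N
              = sum_f_R0 (fun j => INR j * q j * X ^ (pred j)) (S N).
Proof.
  induction N as [|N IH].
  - simpl. ring.
  - rewrite tech5, IH. rewrite (tech5 _ (S N)). reflexivity.
Qed.

Lemma F2 q X N : sum_f_R0 (fun i => INR (i - 1) * q (i - 1)%nat * X ^ i) (S N)
              = sum_f_R0 (fun j => INR j * q j * X ^ (S j)) N.
Proof.
  induction N as [|N IH].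
  - simpl. ring.
  - rewrite tech5, IH. rewrite (tech5 _ N). reflexivity.
Qed.

Lemma alg s q X N : q (S N) = 0 -> q (S (S N)) = 0 ->
  sum_f_R0 (fun j => q j * (INR j * X ^ (pred j) * ((1 + s * X^2)/2))) N
  = sum_f_R0 (fun i => ((INR (S i) * q (S i) + s * (INR (i - 1) * q (i - 1)%nat)) / 2) * X ^ i) (S N).
Proof.
  intros H1 H2.
  transitivity (sum_f_R0 (fun i => (INR (S i) * q (S i) * X ^ i) * /2) (S N)
     + sum_f_R0 (fun i => (INR (i - 1) * q (i - 1)%nat * X ^ i) * (s/2)) (S N)).
  2:{ rewrite <- sum_plus. apply sum_eq. intros; field. }
  rewrite <- !scal_sum. rewrite F1, F2. rewrite !tech5. rewrite H1, H2.
  rewrite (sum_eq (fun j => q j * (INR j * X ^ (pred j) * ((1 + s * X^2)/2)))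
      (fun j => (INR j * q j * X ^ (pred j)) * /2 + (INR j * q j * X ^ (S j)) * (s/2))).
  - rewrite sum_plus, <- !scal_sum. ring.
  - intros j _. destruct j as [|j].
    + simpl. ring.
    + simpl pred. simpl pow. field.
Qed.

Lemma deriv_poly (phi : R -> R) z dphi q N : is_derive phi z dphi ->
  is_derive (fun t => sum_f_R0 (fun j => q j * phi t ^ j) N) z
            (sum_f_R0 (fun j => q j * (INR j * dphi * phi z ^ pred j)) N).
Proof.
  intros Hd. induction N as [|N IH].
  - simpl. apply is_derive_scal. apply (is_derive_pow phi 0 z dphi Hd).
  - simpl sum_f_R0. apply (is_derive_plus (fun t => sum_f_R0 (fun j => q j * phi t ^ j) N)
       (fun t => q (S N) * phi t ^ (S N))).
    + exact IH.
    + apply is_derive_scal. apply is_derive_pow. exact Hd.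
Qed.

Section DP.
Variable s : R.
Variable phi : R -> R.
Variables lo hi : R.
Hypothesis Hphi : forall z, lo < z < hi -> is_derive phi z ((1 + s * phi z ^ 2) / 2).

Definition Qp n z := sum_f_R0 (fun j => pp s n j * phi z ^ j) (S n).

Lemma Qp_deriv n z : lo < z < hi -> is_derive (Qp n) z (Qp (S n) z).
Proof.
  intros Hz. unfold Qp.
  eapply is_derive_ext. { intros t. reflexivity. }
  replace (sum_f_R0 (fun j => pp s (S n) j * phi z ^ j) (S (S n)))
     with (sum_f_R0 (fun j => pp s n j * (INR j * ((1 + s * phi z ^ 2) / 2) * phi z ^ pred j)) (S n)).
  - apply deriv_poly. apply Hphi; exact Hz.
  - rewrite (sum_eq _ (fun j => pp s n j * (INR j * phi z^(pred j) * ((1+s*phi z^2)/2)))) by (intros; ring).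
    rewrite alg by (apply pp_supp; lia). reflexivity.
Qed.

Lemma in_int_loc z : lo < z < hi -> locally z (fun t => lo < t < hi).
Proof.
  intros Hz. apply (locally_interval _ z lo hi); tauto.
Qed.

Lemma Derive_n_phi n z : lo < z < hi -> Derive_n phi n z = Qp n z.
Proof.
  revert z; induction n as [|n IH]; intros z Hz.
  - unfold Qp. simpl. ring.
  - simpl Derive_n. rewrite (Derive_ext_loc _ (Qp n)).
    + apply is_derive_unique. apply Qp_deriv; exact Hz.
    + eapply filter_imp; [|apply in_int_loc; exact Hz]. intros t Ht. apply IH; exact Ht.
Qed.

Lemma ex_derive_n_phi n z : lo < z < hi -> ex_derive_n phi n z.
Proof.
  destruct n as [|n]; intros Hz; [exact I|].
  simpl. apply ex_derive_ext_loc with (Qp n).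
  - eapply filter_imp; [|apply in_int_loc; exact Hz]. intros t Ht. symmetry. apply Derive_n_phi; exact Ht.
  - eexists. apply Qp_deriv; exact Hz.
Qed.
End DP.

Lemma pp_S s n j : pp s (S n) j = (INR (S j) * pp s n (S j) + s * (INR (j - 1) * pp s n (j - 1))) / 2.
Proof. reflexivity. Qed.

Lemma pp_cmp n j : 0 <= pp 1 n j /\ Rabs (pp (-1) n j) <= pp 1 n j.
Proof.
  revert j; induction n as [|n IH]; intros j.
  - simpl. destruct (Nat.eqb j 1); rewrite ?Rabs_R1, ?Rabs_R0; lra.
  - rewrite !pp_S. destruct (IH (S j)) as [A1 A2]. destruct (IH (j-1)%nat) as [B1 B2].
    pose proof (pos_INR (S j)). pose proof (pos_INR (j-1)).
    split.
    + apply Rmult_le_pos; [|lra]. apply Rplus_le_le_0_compat; [apply Rmult_le_pos; lra|].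
      rewrite Rmult_1_l. apply Rmult_le_pos; lra.
    + unfold Rdiv. rewrite Rabs_mult, (Rabs_pos_eq (/2)) by lra.
      apply Rmult_le_compat_r; [lra|].
      eapply Rle_trans; [apply Rabs_triang|].
      rewrite !Rabs_mult. rewrite (Rabs_left (-1)) by lra.
      rewrite (Rabs_pos_eq (INR (S j))) by lra. rewrite (Rabs_pos_eq (INR (j-1))) by lra.
      replace (- -1) with 1 by ring.
      apply Rplus_le_compat.
      * apply Rmult_le_compat_l; lra.
      * rewrite !Rmult_1_l. apply Rmult_le_compat_l; lra.
Qed.

Lemma Qp_0 s n (phi : R -> R) z : phi z = 0 -> Qp s phi n z = pp s n 0.
Proof.
  intros H. unfold Qp. rewrite H. rewrite decomp_sum by lia. simpl pred.
  rewrite (sum_eq _ (fun _ => 0)). rewrite sum_cte. simpl. ring.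
  intros i _. rewrite pow_i by lia. ring.
Qed.

Lemma Qp_nonneg n (phi : R -> R) z : 0 <= phi z -> 0 <= Qp 1 phi n z.
Proof.
  intros H. unfold Qp. apply cond_pos_sum. intros j. apply Rmult_le_pos.
  apply pp_cmp. apply pow_le; exact H.
Qed.


Definition tT (z : R) : R := tan (z / 2).
Definition th (z : R) : R := 1 - 2 / (exp z + 1).

Lemma tT_deriv z : -PI < z < PI -> is_derive tT z ((1 + 1 * tT z ^ 2) / 2).
Proof.
  intros Hz. unfold tT.
  assert (Hc : cos (z/2) <> 0).
  { assert (0 < cos (z/2)); [|lra]. apply cos_gt_0; lra. }
  eapply is_derive_ext. { intros t. reflexivity. }
  replace ((1 + 1 * tan (z / 2) ^ 2) / 2) with (scal (/2) (tan (z/2) ^ 2 + 1)).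
  - apply (is_derive_comp tan (fun t => t / 2)).
    + apply is_derive_tan. exact Hc.
    + auto_derive; [exact I|field].
  - simpl. unfold scal; simpl. unfold mult; simpl. field.
Qed.

Lemma th_deriv z : -1 < z < 1 -> is_derive th z ((1 + (-1) * th z ^ 2) / 2).
Proof.
  intros _. unfold th. pose proof (exp_pos z).
  auto_derive.
  - lra.
  - field. lra.
Qed.

Lemma tT_0 : tT 0 = 0.
Proof. unfold tT. replace (0/2) with 0 by field. apply tan_0. Qed.

Lemma th_0 : th 0 = 0.
Proof. unfold th. rewrite exp_0. field. Qed.

Lemma tT_nonneg z : 0 <= z < PI -> 0 <= tT z.
Proof.
  intros Hz. unfold tT, tan. apply Rdiv_le_0_compat.
  - apply sin_ge_0; lra.
  - apply cos_gt_0; lra.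
Qed.

Lemma sum_nonneg_le f n : (forall k, (k <= n)%nat -> 0 <= f k) -> 0 <= sum_f_R0 f n.
Proof.
  induction n as [|n IH]; intros H.
  - simpl. apply H. lia.
  - rewrite tech5. apply Rplus_le_le_0_compat. apply IH. intros; apply H; lia. apply H; lia.
Qed.

Lemma term_le_sum f n : (forall k, (k <= n)%nat -> 0 <= f k) -> f n <= sum_f_R0 f n.
Proof.
  intros H. destruct n as [|n].
  - simpl. lra.
  - rewrite tech5. assert (0 <= sum_f_R0 f n) by (apply sum_nonneg_le; intros; apply H; lia). lra.
Qed.

Lemma DT_eq n z : -PI < z < PI -> Derive_n tT n z = Qp 1 tT n z.
Proof. intros Hz. apply (Derive_n_phi 1 tT (-PI) PI); [apply tT_deriv|exact Hz]. Qed.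

Lemma Dth_eq n z : -1 < z < 1 -> Derive_n th n z = Qp (-1) th n z.
Proof. intros Hz. apply (Derive_n_phi (-1) th (-1) 1); [apply th_deriv|exact Hz]. Qed.

Lemma taylor_bound n s : 0 < s < PI -> s ^ n / INR (Factorial.fact n) * pp 1 n 0 <= tT s.
Proof.
  intros Hs. pose proof PI_RGT_0.
  destruct (Taylor_Lagrange tT n 0 s) as [zeta [Hz E]].
  - lra.
  - intros t Ht k _. apply (ex_derive_n_phi 1 tT (-PI) PI); [apply tT_deriv|lra].
  - rewrite E. rewrite Rminus_0_r.
    assert (Hterm : forall m, 0 <= s ^ m / INR (Factorial.fact m) * Derive_n tT m 0).
    { intros m. rewrite DT_eq by lra. rewrite Qp_0 by apply tT_0.
      apply Rmult_le_pos; [|apply pp_cmp]. apply Rdiv_le_0_compat. apply pow_le; lra.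
      apply lt_0_INR. apply Nat.neq_0_lt_0, Factorial.fact_neq_0. }
    assert (Hrem : 0 <= s ^ S n / INR (Factorial.fact (S n)) * Derive_n tT (S n) zeta).
    { rewrite DT_eq by lra. apply Rmult_le_pos.
      apply Rdiv_le_0_compat. apply pow_le; lra.
      apply lt_0_INR. apply Nat.neq_0_lt_0, Factorial.fact_neq_0.
      apply Qp_nonneg. apply tT_nonneg. lra. }
    pose proof (term_le_sum (fun m => s ^ m / INR (Factorial.fact m) * Derive_n tT m 0) n
                  (fun k _ => Hterm k)) as HT.
    simpl in HT. rewrite DT_eq in HT by lra. rewrite Qp_0 in HT by apply tT_0. lra.
Qed.

Definition ccoef (n : nat) : R := (2 ^ (n + 2) - 2) * acoef (S n) + (if Nat.eqb n 0 then 1 else 0).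

Lemma acoef_0 : acoef 0 = 1.
Proof. reflexivity. Qed.

Lemma acoef_1 : acoef 1 = - / 2.
Proof. rewrite acoef_S. simpl. rewrite acoef_0. unfold ecoef. simpl. field. Qed.

Lemma bern_nz z : z <> 0 -> bern_gen z = z / (exp z - 1).
Proof. intros H. unfold bern_gen. destruct (Req_EM_T z 0); [contradiction|reflexivity]. Qed.

Lemma exp_ne1 z : z <> 0 -> exp z - 1 <> 0.
Proof.
  intros H E. apply H. apply exp_inv. rewrite exp_0. lra.
Qed.

Lemma g_diff z : z <> 0 -> bern_gen z - bern_gen (2 * z) = z / (exp z + 1).
Proof.
  intros H. rewrite !bern_nz by lra.
  replace (2 * z) with (z + z) by ring. rewrite exp_plus.
  pose proof (exp_ne1 z H). pose proof (exp_pos z).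
  replace (exp z * exp z - 1) with ((exp z - 1) * (exp z + 1)) by ring.
  field. split; lra.
Qed.

Lemma th_series z : z <> 0 -> Rabs z < 1/2 -> is_pseries ccoef z (th z).
Proof.
  intros Hz Hz2.
  assert (R1 : Rbar_lt (Rabs z) (CV_radius acoef)) by (eapply rad_lt; [exact CV_a_ge1|lra]).
  assert (R2 : Rbar_lt (Rabs (2*z)) (CV_radius acoef)).
  { eapply rad_lt; [exact CV_a_ge1|]. rewrite Rabs_mult, Rabs_pos_eq by lra. lra. }
  pose proof (PSeries_correct _ _ (CV_radius_inside _ _ R1)) as S1.
  pose proof (PSeries_correct _ _ (CV_radius_inside _ _ R2)) as S2.
  rewrite <- G1 in S1, S2 by assumption.
  apply is_pseries_R in S1. apply is_pseries_R in S2.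
  assert (S3 : is_series (fun n => ((2 ^ (n+1) - 2) * acoef n) * z ^ n)
                  (-2 * bern_gen z + 2 * bern_gen (2*z))).
  { apply is_series_ext with (fun n => (-2) * (acoef n * z ^ n) + 2 * (acoef n * (2*z)^n)).
    - intros n. rewrite Rpow_mult_distr. rewrite pow_add. simpl. ring.
    - apply is_series_plus_R; apply is_series_scal_R; assumption. }
  assert (S4 : is_series (fun n => ((2 ^ (n+2) - 2) * acoef (S n)) * z ^ n)
                  (/z * (-2 * bern_gen z + 2 * bern_gen (2*z)))).
  { apply is_series_ext with (fun n => /z * (((2 ^ ((S n)+1) - 2) * acoef (S n)) * z ^ (S n))).
    - intros n. replace (n+2)%nat with (S n + 1)%nat by lia. simpl. field. exact Hz.
    - apply is_series_scal_R.
      apply is_series_incr_1_R in S3.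
      match type of S3 with is_series _ ?v => replace (-2 * bern_gen z + 2 * bern_gen (2 * z)) with v end.
      + exact S3.
      + simpl. ring. }
  pose proof (is_pseries_delta z) as S5. apply is_pseries_R in S5.
  apply is_pseries_R. unfold ccoef.
  apply is_series_ext with (fun n => (((2 ^ (n+2) - 2) * acoef (S n)) * z ^ n)
                                          + ((if Nat.eqb n 0 then 1 else 0) * z ^ n)).
  - intros n. symmetry. apply Rmult_plus_distr_r.
  - replace (th z) with (/z * (-2 * bern_gen z + 2 * bern_gen (2*z)) + 1).
    + apply is_series_plus_R; assumption.
    + unfold th.
      replace (-2 * bern_gen z + 2 * bern_gen (2*z)) with (-2 * (bern_gen z - bern_gen (2*z))) by ring.
      rewrite g_diff by exact Hz. pose proof (exp_pos z). field. split; lra.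
Qed.

Lemma th_PSeries z : Rabs z < 1/2 -> th z = PSeries ccoef z.
Proof.
  intros Hz. destruct (Req_EM_T z 0) as [->|Hz0].
  - rewrite PSeries_0, th_0. unfold ccoef. simpl. rewrite acoef_1. field.
  - symmetry. apply is_pseries_unique. apply th_series; assumption.
Qed.

Lemma pow_le1 (q : R) n : 0 <= q <= 1 -> q ^ n <= 1.
Proof. intros H. induction n; simpl. lra. replace 1 with (1*1) by ring. apply Rmult_le_compat; try lra. apply pow_le; lra. Qed.

Lemma CV_c : Rbar_le (/4) (CV_radius ccoef).
Proof.
  apply cv_ge with 5. intros n. unfold ccoef.
  rewrite Rabs_mult. pose proof (acoef_crude (S n)).
  assert (H2 : 2 <= 2 ^ (n+2)).
  { rewrite pow_add. simpl. pose proof (pow_R1_Rle 2 n ltac:(lra)). nra. }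
  assert (Hc : Rabs ((2 ^ (n + 2) - 2) * acoef (S n) + (if Nat.eqb n 0 then 1 else 0)) <= 2 ^ (n+2) + 1).
  { eapply Rle_trans; [apply Rabs_triang|]. rewrite Rabs_mult.
    rewrite (Rabs_pos_eq (2 ^ (n+2) - 2)) by lra.
    apply Rplus_le_compat.
    - replace (2 ^ (n+2)) with ((2 ^ (n+2) - 2) * 1 + 2) by ring.
      pose proof (Rabs_pos (acoef (S n))). nra.
    - destruct (Nat.eqb n 0); rewrite ?Rabs_R1, ?Rabs_R0; lra. }
  rewrite (Rabs_pos_eq ((/4)^n)) by (apply pow_le; lra).
  assert (E : 2 ^ (n + 2) * (/4)^n = 4 * (/2)^n).
  { rewrite pow_add. replace (/2) with (2 * /4) by field. rewrite Rpow_mult_distr. simpl. ring. }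
  pose proof (pow_le1 (/2) n ltac:(lra)). pose proof (pow_le1 (/4) n ltac:(lra)).
  pose proof (pow_le (/4) n ltac:(lra)).
  apply Rle_trans with ((2 ^ (n+2) + 1) * (/4)^n).
  - apply Rmult_le_compat_r; assumption.
  - rewrite Rmult_plus_distr_r, E. lra.
Qed.

Lemma Dth0 n : Derive_n th n 0 = INR (Factorial.fact n) * ccoef n.
Proof.
  rewrite (Derive_n_ext_loc _ (PSeries ccoef)).
  - rewrite Derive_n_PSeries.
    + rewrite PSeries_0. unfold PS_derive_n. simpl. field.
    + rewrite Rabs_R0. eapply Rbar_lt_le_trans; [|exact CV_c]. simpl; lra.
  - apply locally_R with (1/2); [lra|]. intros t Ht. apply th_PSeries.
    rewrite Rminus_0_r in Ht. exact Ht.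
Qed.

Lemma c_bound n s : 0 < s < PI -> Rabs (ccoef n) <= tT s / s ^ n.
Proof.
  intros Hs.
  assert (Hf : 0 < INR (Factorial.fact n)) by (apply lt_0_INR, Nat.neq_0_lt_0, Factorial.fact_neq_0).
  assert (Hsn : 0 < s ^ n) by (apply pow_lt; lra).
  pose proof (taylor_bound n s Hs) as HT.
  assert (E : INR (Factorial.fact n) * Rabs (ccoef n) = Rabs (pp (-1) n 0)).
  { rewrite <- (Rabs_pos_eq (INR _)) by lra. rewrite <- Rabs_mult. rewrite <- Dth0.
    rewrite Dth_eq by lra. rewrite Qp_0 by apply th_0. reflexivity. }
  destruct (pp_cmp n 0) as [_ Hc].
  apply Rmult_le_reg_l with (INR (Factorial.fact n) * s ^ n / INR (Factorial.fact n)).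
  - apply Rdiv_lt_0_compat; [apply Rmult_lt_0_compat|]; lra.
  - replace (INR (Factorial.fact n) * s ^ n / INR (Factorial.fact n) * (tT s / s ^ n)) with (tT s) by (field; lra).
    replace (INR (Factorial.fact n) * s ^ n / INR (Factorial.fact n) * Rabs (ccoef n))
      with (s ^ n / INR (Factorial.fact n) * (INR (Factorial.fact n) * Rabs (ccoef n))) by (field; lra).
    rewrite E. eapply Rle_trans; [|exact HT]. apply Rmult_le_compat_l; [|exact Hc].
    left; apply Rdiv_lt_0_compat; lra.
Qed.

Lemma a_term_bound n s : 0 < s < PI -> (1 <= n)%nat ->
  Rabs (acoef (S n) * (2 * s) ^ (S n)) <= s * tT s.
Proof.
  intros Hs Hn. pose proof (c_bound n s Hs) as Hc.
  assert (Hsn : 0 < s ^ n) by (apply pow_lt; lra).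
  assert (Hp : 2 <= 2 ^ (n+1)).
  { rewrite pow_add. simpl. pose proof (pow_R1_Rle 2 n ltac:(lra)). nra. }
  assert (E2 : 2 ^ (n+2) = 2 * 2 ^ (n+1)) by (rewrite !pow_add; simpl; ring).
  unfold ccoef in Hc. replace (Nat.eqb n 0) with false in Hc by (symmetry; apply Nat.eqb_neq; lia).
  rewrite Rplus_0_r, Rabs_mult, (Rabs_pos_eq (2 ^ (n+2) - 2)) in Hc by lra.
  rewrite Rabs_mult, (Rabs_pos_eq ((2*s)^(S n))) by (apply pow_le; lra).
  rewrite Rpow_mult_distr.
  assert (HA : Rabs (acoef (S n)) <= tT s / s ^ n / (2 ^ (n + 2) - 2)).
  { apply Rmult_le_reg_l with (2 ^ (n+2) - 2). lra.
    replace ((2 ^ (n + 2) - 2) * (tT s / s ^ n / (2 ^ (n + 2) - 2))) with (tT s / s ^ n) by (field; lra).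
    exact Hc. }
  pose proof (tT_nonneg s ltac:(lra)).
  replace (2 ^ S n) with (2 ^ (n+1)) by (rewrite Nat.add_1_r; reflexivity).
  simpl (s ^ S n).
  apply Rle_trans with (tT s / s ^ n / (2 ^ (n + 2) - 2) * (2 ^ (n+1) * (s * s ^ n))).
  - apply Rmult_le_compat_r; [|exact HA]. apply Rmult_le_pos; [lra|]. apply Rmult_le_pos; lra.
  - rewrite E2. replace (tT s / s ^ n / (2 * 2 ^ (n + 1) - 2) * (2 ^ (n + 1) * (s * s ^ n)))
      with (s * tT s * (2 ^ (n+1) / (2 * 2 ^ (n+1) - 2))) by (field; lra).
    rewrite <- (Rmult_1_r (s * tT s)) at 2. apply Rmult_le_compat_l. nra.
    apply Rmult_le_reg_r with (2 * 2 ^ (n + 1) - 2). lra.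
    unfold Rdiv. rewrite Rmult_assoc, Rinv_l by lra. lra.
Qed.

Lemma CV_a_2s s : 0 < s < PI -> Rbar_le (2 * s) (CV_radius acoef).
Proof.
  intros Hs. pose proof (tT_nonneg s ltac:(lra)).
  apply cv_ge with (1 + s + s * tT s). intros m.
  destruct m as [|[|n]].
  - simpl. rewrite acoef_0, Rmult_1_r, Rabs_R1. nra.
  - rewrite acoef_1. simpl. rewrite Rmult_1_r, Rabs_mult, Rabs_Ropp, !Rabs_pos_eq by lra. nra.
  - pose proof (a_term_bound (S n) s Hs ltac:(lia)). nra.
Qed.

Lemma CV_a_lt r : 0 <= r < 2 * PI -> Rbar_lt r (CV_radius acoef).
Proof.
  intros Hr. pose proof PI_RGT_0.
  eapply Rbar_lt_le_trans; [|apply (CV_a_2s ((r/2 + PI)/2)); lra]. simpl. lra.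
Qed.


Lemma is_RInt_ext_R (f g : R -> R) a b (l : R) : (forall t, Rmin a b < t < Rmax a b -> f t = g t) ->
  is_RInt f a b l -> is_RInt g a b l.
Proof. intros H1 H2. apply (is_RInt_ext f g a b l H1 H2). Qed.

Lemma is_RInt_plus_R (f g : R -> R) a b lf lg : is_RInt f a b lf -> is_RInt g a b lg ->
  is_RInt (fun t => f t + g t) a b (lf + lg).
Proof. intros. apply (is_RInt_plus f g a b lf lg); assumption. Qed.
Lemma is_RInt_minus_R (f g : R -> R) a b lf lg : is_RInt f a b lf -> is_RInt g a b lg ->
  is_RInt (fun t => f t - g t) a b (lf - lg).
Proof. intros. apply (is_RInt_minus f g a b lf lg); assumption. Qed.
Lemma is_RInt_scal_R (f : R -> R) k a b lf : is_RInt f a b lf ->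
  is_RInt (fun t => k * f t) a b (k * lf).
Proof. intros. apply (is_RInt_scal f a b k lf); assumption. Qed.
Lemma is_RInt_deriv_R (F f : R -> R) a b : a <= b ->
  (forall t, a <= t <= b -> is_derive F t (f t)) ->
  (forall t, a <= t <= b -> continuous f t) -> is_RInt f a b (F b - F a).
Proof.
  intros Hab H1 H2. apply (is_RInt_derive F f a b).
  - intros t Ht. apply H1. rewrite Rmin_left, Rmax_right in Ht by lra. exact Ht.
  - intros t Ht. apply H2. rewrite Rmin_left, Rmax_right in Ht by lra. exact Ht.
Qed.

Lemma cont_of_deriv (f : R -> R) t : ex_derive f t -> continuous f t.
Proof. intros H. apply (ex_derive_continuous (K:=R_AbsRing) (V:=R_NormedModule)). exact H. Qed.

Lemma fact_pos n : 0 < INR (Factorial.fact n).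
Proof. apply lt_0_INR, Nat.neq_0_lt_0, Factorial.fact_neq_0. Qed.

Lemma sum_zero_pow n : sum_f_R0 (fun j => 0 ^ j / INR (Factorial.fact j)) n = 1.
Proof.
  induction n as [|n IH].
  - simpl. field.
  - rewrite tech5, IH. simpl pow. rewrite Rmult_0_l. unfold Rdiv. ring.
Qed.

Definition Fr (y : R) (n : nat) (t : R) := exp t * sum_f_R0 (fun j => (y - t) ^ j / INR (Factorial.fact j)) n.

Lemma aux_der m k t y : is_derive (fun u => exp u * ((y-u)^m * k)) t
   (exp t * ((y-t)^m*k) - exp t * (INR m * (y-t)^(pred m) * k)).
Proof. auto_derive; [exact I|]. unfold Rminus. ring. Qed.

Lemma Fr_deriv y n t : is_derive (Fr y n) t (exp t * (y - t) ^ n / INR (Factorial.fact n)).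
Proof.
  induction n as [|n IH].
  - unfold Fr. simpl. auto_derive; [exact I|]. field.
  - pose proof (fact_pos n) as Hf.
    assert (HS : INR (Factorial.fact (S n)) = INR (S n) * INR (Factorial.fact n)).
    { rewrite <- mult_INR. reflexivity. }
    assert (H2 : is_derive (fun u => exp u * ((y - u) ^ S n / INR (Factorial.fact (S n)))) t
       (exp t * (y - t) ^ S n / INR (Factorial.fact (S n)) - exp t * (y - t) ^ n / INR (Factorial.fact n))).
    { pose proof (aux_der (S n) (/ INR (Factorial.fact (S n))) t y) as A.
      simpl pred in A. rewrite HS in A |- *. unfold Rdiv.
      match type of A with is_derive _ _ ?l => replace (exp t * (y - t) ^ S n * / (INR (S n) * INR (Factorial.fact n)) -
        exp t * (y - t) ^ n * / INR (Factorial.fact n)) with l end.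
      - exact A.
      - field. split. lra. rewrite S_INR. pose proof (pos_INR n). lra. }
    pose proof (is_derive_plus _ _ _ _ _ IH H2) as H3.
    apply (is_derive_ext _ (Fr y (S n))) in H3.
    + match type of H3 with is_derive _ _ ?l => replace (exp t * (y - t) ^ S n / INR (Factorial.fact (S n))) with l end.
      exact H3. unfold plus; simpl. ring.
    + intros u. unfold Fr. rewrite tech5. unfold plus; simpl. ring.
Qed.

Lemma Rrem_RInt y n : 0 < y -> is_RInt (fun t => exp t * (y - t) ^ n / INR (Factorial.fact n)) 0 y (Rrem n y).
Proof.
  intros Hy. replace (Rrem n y) with (Fr y n y - Fr y n 0).
  - apply is_RInt_deriv_R; [lra| |].
    + intros; apply Fr_deriv.
    + intros t _. apply cont_of_deriv. pose proof (fact_pos n). auto_derive. lra.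
  - unfold Fr, Rrem. replace (y - y) with 0 by ring. rewrite sum_zero_pow, exp_0.
    rewrite Rminus_0_r. ring.
Qed.

Lemma term_RInt x y n : 0 < y ->
  is_RInt (fun t => exp t * (acoef n * (x * (y - t)) ^ n)) 0 y (Bernoulli n * Rrem n y * x ^ n).
Proof.
  intros Hy. pose proof (fact_pos n).
  apply is_RInt_ext_R with (fun t => (acoef n * x ^ n * INR (Factorial.fact n)) * (exp t * (y - t) ^ n / INR (Factorial.fact n))).
  - intros t _. rewrite Rpow_mult_distr. field. lra.
  - replace (Bernoulli n * Rrem n y * x ^ n) with ((acoef n * x ^ n * INR (Factorial.fact n)) * Rrem n y)
      by (rewrite Bernoulli_a; ring).
    apply is_RInt_scal_R. apply Rrem_RInt; exact Hy.
Qed.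

Lemma SN_RInt x y N : 0 < y ->
  is_RInt (fun t => exp t * sum_f_R0 (fun n => acoef n * (x * (y - t)) ^ n) N) 0 y
          (sum_f_R0 (fun n => Bernoulli n * Rrem n y * x ^ n) N).
Proof.
  intros Hy. induction N as [|N IH].
  - exact (term_RInt x y 0 Hy).
  - rewrite tech5.  apply is_RInt_ext_R with (fun t => exp t * sum_f_R0 (fun n => acoef n * (x * (y - t)) ^ n) N
       + exp t * (acoef (S N) * (x * (y - t)) ^ (S N))).
    + intros t _. rewrite tech5. ring.
    + apply is_RInt_plus_R; [exact IH|apply term_RInt; exact Hy].
Qed.

Definition Aabs (r : R) (n : nat) := Rabs (acoef n) * r ^ n.
Definition epsN (r : R) (N : nat) := Series (Aabs r) - sum_f_R0 (Aabs r) N.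

Lemma Aabs_ex r : 0 <= r < 2 * PI -> ex_series (Aabs r).
Proof.
  intros Hr. pose proof (CV_disk_inside acoef r) as H.
  rewrite Rabs_pos_eq in H by lra. specialize (H (CV_a_lt r Hr)).
  eapply ex_series_ext; [|exact H]. intros n. unfold Aabs. rewrite Rabs_mult, (Rabs_pos_eq (r^n)) by (apply pow_le; lra). reflexivity.
Qed.

Lemma epsN_lim r : 0 <= r < 2 * PI -> is_lim_seq (epsN r) 0.
Proof.
  intros Hr. pose proof (Series_correct _ (Aabs_ex r Hr)) as H.
  unfold is_series in H.
  assert (H2 : is_lim_seq (fun N => sum_f_R0 (Aabs r) N) (Series (Aabs r))).
  { eapply is_lim_seq_ext; [|exact H]. intros n. apply sum_n_Reals. }
  unfold epsN. replace 0 with (Series (Aabs r) - Series (Aabs r)) by ring.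
  apply is_lim_seq_minus'. apply is_lim_seq_const. exact H2.
Qed.

Lemma tail_bound r u N : 0 <= u <= r -> r < 2 * PI ->
  Rabs (PSeries acoef u - sum_f_R0 (fun n => acoef n * u ^ n) N) <= epsN r N.
Proof.
  intros Hu Hr.
  assert (Hux : Rbar_lt (Rabs u) (CV_radius acoef)) by (rewrite Rabs_pos_eq by lra; apply CV_a_lt; lra).
  pose proof (CV_disk_inside _ _ Hux) as HB.
  assert (HBe : ex_series (fun n => acoef n * u ^ n)).
  { apply ex_series_Rabs. exact HB. }
  assert (HA := Aabs_ex r ltac:(lra)).
  unfold PSeries. rewrite (Series_incr_n _ (S N)) by (lia || exact HBe).
  unfold epsN. rewrite (Series_incr_n (Aabs r) (S N)) by (lia || exact HA).
  simpl pred. replace (sum_f_R0 (fun n => acoef n * u ^ n) N + Series (fun k => acoef (S N + k) * u ^ (S N + k))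
     - sum_f_R0 (fun n => acoef n * u ^ n) N) with (Series (fun k => acoef (S N + k) * u ^ (S N + k))) by ring.
  replace (sum_f_R0 (Aabs r) N + Series (fun k => Aabs r (S N + k)) - sum_f_R0 (Aabs r) N)
    with (Series (fun k => Aabs r (S N + k))) by ring.
  eapply Rle_trans. apply Series_Rabs.
  - apply (ex_series_incr_n (fun n => Rabs (acoef n * u ^ n)) (S N)). exact HB.
  - apply Series_le.
    + intros n. split. apply Rabs_pos. unfold Aabs. rewrite Rabs_mult, (Rabs_pos_eq (u ^ _)) by (apply pow_le; lra).
      apply Rmult_le_compat_l. apply Rabs_pos. apply pow_incr. lra.
    + apply (ex_series_incr_n (Aabs r) (S N)). exact HA.
Qed.

Lemma RInt_abs_bound (f : R -> R) a b (l : R) M : a <= b -> (forall t, a <= t <= b -> Rabs (f t) <= M) ->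
  is_RInt f a b l -> Rabs l <= (b - a) * M.
Proof. intros H1 H2 H3. apply (norm_RInt_le_const f a b l M H1 H2 H3). Qed.

Definition fV (x y t : R) := exp t * PSeries acoef (x * (y - t)).

Lemma fV_cont x y t : 0 < x -> x * y < 2 * PI -> 0 <= t <= y -> continuous (fV x y) t.
Proof.
  intros Hx Hxy Ht. apply cont_of_deriv. unfold fV. auto_derive.
  replace (x * (y + - t)) with (x * (y - t)) by ring.
  apply ex_derive_PSeries. rewrite Rabs_pos_eq by nra. apply CV_a_lt. nra.
Qed.

Lemma fV_ex x y : 0 < x -> 0 < y -> x * y < 2 * PI -> ex_RInt (fV x y) 0 y.
Proof.
  intros Hx Hy Hxy. apply (ex_RInt_continuous (V:=R_CompleteNormedModule)).
  intros t Ht. rewrite Rmin_left, Rmax_right in Ht by lra. apply fV_cont; assumption.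
Qed.

Lemma S_lim x y : 0 < x -> 0 < y -> x * y < 2 * PI ->
  is_series (fun n => Bernoulli n * Rrem n y * x ^ n) (RInt (fV x y) 0 y).
Proof.
  intros Hx Hy Hxy. set (V := RInt (fV x y) 0 y).
  set (r := x * y).
  assert (HV : is_RInt (fV x y) 0 y V) by (apply (RInt_correct (V:=R_CompleteNormedModule)); apply fV_ex; assumption).
  assert (Hb : forall N, Rabs (sum_f_R0 (fun n => Bernoulli n * Rrem n y * x ^ n) N - V) <= y * (exp y * epsN r N)).
  { intros N. replace y with (y - 0) at 1 by ring.
    apply RInt_abs_bound with (fun t => exp t * sum_f_R0 (fun n => acoef n * (x * (y - t)) ^ n) N - fV x y t).
    - lra.
    - intros t Ht. unfold fV. rewrite <- Rmult_minus_distr_l, Rabs_mult, Rabs_pos_eq by (left; apply exp_pos).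
      apply Rmult_le_compat.
      + left; apply exp_pos.
      + apply Rabs_pos.
      + destruct (Req_dec t y) as [->|]; [lra|]. left. apply exp_increasing. lra.
      + rewrite Rabs_minus_sym. apply tail_bound; unfold r; nra.
    - apply is_RInt_minus_R; [apply SN_RInt; exact Hy | exact HV]. }
  assert (L0 : is_lim_seq (fun N => sum_f_R0 (fun n => Bernoulli n * Rrem n y * x ^ n) N - V) 0).
  { apply is_lim_seq_abs_0. apply is_lim_seq_le_le with (fun _ => 0) (fun N => y * (exp y * epsN r N)).
    - intros N. split; [apply Rabs_pos|apply Hb].
    - apply is_lim_seq_const.
    - replace (Finite 0) with (Rbar_mult y (Rbar_mult (exp y) 0)) by (simpl; f_equal; ring).
      apply is_lim_seq_scal_l. apply is_lim_seq_scal_l. apply epsN_lim. unfold r; nra. }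
  assert (L : is_lim_seq (fun N => sum_f_R0 (fun n => Bernoulli n * Rrem n y * x ^ n) N) V).
  { apply is_lim_seq_ext with (fun N => (sum_f_R0 (fun n => Bernoulli n * Rrem n y * x ^ n) N - V) + V).
    - intros; ring.
    - replace (Finite V) with (Finite (0 + V)) by (f_equal; ring). apply is_lim_seq_plus'. exact L0. apply is_lim_seq_const. }
  apply (is_lim_seq_ext _ _ _ (fun n => eq_sym (sum_n_Reals _ n))) in L. exact L.
Qed.


Definition Gm (x y : R) (m : nat) (t : R) :=
  x * exp ((INR m * x + 1) * t - INR m * x * y) * ((y - t) / (INR m * x + 1) + / (INR m * x + 1) ^ 2).

Lemma Gm_deriv x y m t : 0 < x ->
  is_derive (Gm x y m) t (exp t * (x * (y - t)) * exp (- (INR m * (x * (y - t))))).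
Proof.
  intros Hx. pose proof (pos_INR m). assert (Ha : INR m * x + 1 <> 0) by nra.
  unfold Gm. auto_derive; [exact I|].
  replace (exp t * (x * (y - t)) * exp (- (INR m * (x * (y - t)))))
    with (x * (y - t) * exp ((INR m * x + 1) * t - INR m * x * y)).
  2:{ replace ((INR m * x + 1) * t - INR m * x * y) with (t + - (INR m * (x * (y - t)))) by ring.
      rewrite exp_plus. ring. }
  unfold Rminus. field. exact Ha.
Qed.

Lemma exp_pow_INR a m : exp a ^ m = exp (INR m * a).
Proof.
  induction m as [|m IH].
  - simpl. rewrite Rmult_0_l, exp_0. reflexivity.
  - simpl pow. rewrite IH, <- exp_plus, S_INR. f_equal. ring.
Qed.

Definition Lm (x y : R) (m : nat) :=
  exp y / x * (1 ^ m / (INR m + / x) ^ 2) - y * (exp (- (x * y)) ^ m / (INR m + / x) ^ 1)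
  - / x * (exp (- (x * y)) ^ m / (INR m + / x) ^ 2).

Definition Jf (x y : R) (m : nat) (t : R) := exp t * (x * (y - t)) * exp (- (INR m * (x * (y - t)))).

Lemma J_RInt x y m : 0 < x -> 0 < y -> is_RInt (Jf x y m) 0 y (Lm x y m).
Proof.
  intros Hx Hy. pose proof (pos_INR m).
  assert (Ha : INR m * x + 1 <> 0) by nra.
  assert (Hb : INR m + / x <> 0) by (pose proof (Rinv_0_lt_compat x Hx); lra).
  replace (Lm x y m) with (Gm x y m y - Gm x y m 0).
  - apply is_RInt_deriv_R; [lra| |].
    + intros t _. apply Gm_deriv; exact Hx.
    + intros t _. apply cont_of_deriv. unfold Jf. auto_derive. exact I.
  - unfold Gm, Lm. rewrite pow1, exp_pow_INR.
    replace ((INR m * x + 1) * y - INR m * x * y) with y by ring.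
    replace ((INR m * x + 1) * 0 - INR m * x * y) with (INR m * - (x * y)) by ring.
    field. repeat split; try lra. 
Qed.

Lemma bern_bounds u : 0 <= u -> 0 < bern_gen u <= 1.
Proof.
  intros Hu. destruct (Req_dec u 0) as [->|Hu0].
  - unfold bern_gen. destruct (Req_EM_T 0 0); [lra|contradiction].
  - rewrite bern_nz by exact Hu0. pose proof (exp_ineq1 u Hu0).
    split.
    + apply Rdiv_lt_0_compat; lra.
    + apply Rmult_le_reg_r with (exp u - 1). lra.
      unfold Rdiv. rewrite Rmult_assoc, Rinv_l by lra. lra.
Qed.

Lemma geom_sum u M : 0 <= u ->
  sum_f_R0 (fun m => u * exp (- (INR (S m) * u))) M = bern_gen u * (1 - exp (- (INR (S M) * u))).
Proof.
  intros Hu. destruct (Req_dec u 0) as [->|Hu0].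
  - rewrite (sum_eq _ (fun _ => 0)) by (intros; ring). rewrite sum_cte.
    rewrite Rmult_0_r, Ropp_0, exp_0. ring.
  - rewrite bern_nz by exact Hu0. pose proof (exp_ne1 u Hu0). pose proof (exp_pos u).
    induction M as [|M IH].
    + simpl sum_f_R0. rewrite S_INR. simpl INR. rewrite Rplus_0_l, Rmult_1_l, exp_Ropp.
      field. split; lra.
    + rewrite tech5, IH.
      replace (- (INR (S (S M)) * u)) with (- (INR (S M) * u) + - u) by (rewrite (S_INR (S M)); ring).
      rewrite exp_plus, (exp_Ropp u). field. split; lra.
Qed.

Lemma sumJ_RInt x y M : 0 < x -> 0 < y ->
  is_RInt (fun t => sum_f_R0 (fun m => Jf x y (S m) t) M) 0 y (sum_f_R0 (fun m => Lm x y (S m)) M).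
Proof.
  intros Hx Hy. induction M as [|M IH].
  - apply J_RInt; assumption.
  - rewrite tech5. apply is_RInt_ext_R with (fun t => sum_f_R0 (fun m => Jf x y (S m) t) M + Jf x y (S (S M)) t).
    + intros t _. rewrite tech5. reflexivity.
    + apply is_RInt_plus_R; [exact IH|apply J_RInt; assumption].
Qed.

Lemma RInt_abs_le_fun (f g : R -> R) a b (lf lg : R) : a <= b ->
  (forall t, a <= t <= b -> Rabs (f t) <= g t) -> is_RInt f a b lf -> is_RInt g a b lg -> Rabs lf <= lg.
Proof. intros H1 H2 H3 H4. apply (norm_RInt_le f g a b lf lg H1 H2 H3 H4). Qed.

Lemma expbound_RInt x y K : 0 < x -> 0 < y -> 0 < K ->
  is_RInt (fun t => exp y * exp (- (K * (x * (y - t))))) 0 y (exp y * ((1 - exp (- (K * (x * y)))) / (K * x))).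
Proof.
  intros Hx Hy HK.
  replace (exp y * ((1 - exp (- (K * (x * y)))) / (K * x))) with
    ((fun t => exp y * exp (- (K * (x * (y - t)))) / (K * x)) y - (fun t => exp y * exp (- (K * (x * (y - t)))) / (K * x)) 0).
  - apply (is_RInt_deriv_R (fun t => exp y * exp (- (K * (x * (y - t)))) / (K * x))); [lra| |].
    + intros t _. auto_derive; [exact I|]. unfold Rminus. field. nra.
    + intros t _. apply cont_of_deriv. auto_derive. exact I.
  - simpl. replace (y - y) with 0 by ring. replace (y - 0) with y by ring.
    rewrite Rmult_0_r, Rmult_0_r, Ropp_0, exp_0. field. nra.
Qed.

Lemma T_lim x y : 0 < x -> 0 < y -> x * y < 2 * PI ->
  is_lim_seq (fun M => sum_f_R0 (fun m => Lm x y (S m)) M) (RInt (fV x y) 0 y).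
Proof.
  intros Hx Hy Hxy. set (V := RInt (fV x y) 0 y).
  assert (HV : is_RInt (fV x y) 0 y V) by (apply (RInt_correct (V:=R_CompleteNormedModule)); apply fV_ex; assumption).
  assert (Hb : forall M, Rabs (V - sum_f_R0 (fun m => Lm x y (S m)) M) <= exp y / x * / INR (S M)).
  { intros M. set (K := INR (S M)). assert (HK : 0 < K) by (apply lt_0_INR; lia).
    eapply Rle_trans.
    - apply RInt_abs_le_fun with (f := fun t => fV x y t - sum_f_R0 (fun m => Jf x y (S m) t) M)
         (g := fun t => exp y * exp (- (K * (x * (y - t))))) (a := 0) (b := y).
      + lra.
      + intros t Ht. assert (Hu : 0 <= x * (y - t)) by nra.
        assert (E : fV x y t - sum_f_R0 (fun m => Jf x y (S m) t) M
                    = exp t * bern_gen (x * (y - t)) * exp (- (K * (x * (y - t))))).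
        { unfold fV. rewrite <- G1 by (rewrite Rabs_pos_eq by lra; apply CV_a_lt; nra).
          rewrite (sum_eq _ (fun m => (x * (y - t) * exp (- (INR (S m) * (x * (y - t))))) * exp t))
            by (intros; unfold Jf; ring).
          rewrite <- scal_sum, geom_sum by exact Hu. unfold K. ring. }
        rewrite E. pose proof (bern_bounds _ Hu).
        rewrite !Rabs_mult, !Rabs_pos_eq by (first [left; apply exp_pos | lra]).
        replace (exp y * exp (- (K * (x * (y - t))))) with (exp y * 1 * exp (- (K * (x * (y - t))))) by ring.
        apply Rmult_le_compat_r; [left; apply exp_pos|].
        apply Rmult_le_compat; try lra. left; apply exp_pos.
        destruct (Req_dec t y) as [->|]; [lra|]. left. apply exp_increasing. lra.
      + apply is_RInt_minus_R; [exact HV|apply sumJ_RInt; assumption].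
      + apply expbound_RInt; assumption.
    - pose proof (exp_pos (- (K * (x * y)))). pose proof (exp_pos y).
      replace (exp y / x * / K) with (exp y * (1 / (K * x))) by (field; lra).
      apply Rmult_le_compat_l; [lra|]. unfold Rdiv. apply Rmult_le_compat_r.
      + left. apply Rinv_0_lt_compat. nra.
      + lra. }
  apply is_lim_seq_ext with (fun M => V - (V - sum_f_R0 (fun m => Lm x y (S m)) M)).
  - intros; ring.
  - replace (Finite V) with (Finite (V - 0)) by (f_equal; ring).
    apply is_lim_seq_minus'. apply is_lim_seq_const.
    apply is_lim_seq_abs_0. apply is_lim_seq_le_le with (fun _ => 0) (fun M => exp y / x * / INR (S M)).
    + intros M. split; [apply Rabs_pos|apply Hb].
    + apply is_lim_seq_const.
    + replace (Finite 0) with (Rbar_mult (exp y / x) 0) by (simpl; f_equal; ring).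
      apply is_lim_seq_scal_l.
      apply (is_lim_seq_incr_1 (fun n => / INR n)).
      replace (Finite 0) with (Rbar_inv p_infty) by reflexivity.
      apply is_lim_seq_inv. apply is_lim_seq_INR. discriminate.
Qed.

Lemma ex_series_le_R (a b : nat -> R) : (forall n, Rabs (a n) <= b n) -> ex_series b -> ex_series a.
Proof. intros H1 H2. apply (ex_series_le a b H1 H2). Qed.

Lemma tele_series : is_series (fun n => / (INR n + 1) - / (INR n + 2)) 1.
Proof.
  assert (Hs : forall N, sum_f_R0 (fun n => / (INR n + 1) - / (INR n + 2)) N = 1 - / (INR N + 2)).
  { induction N as [|N IH].
    - simpl. field.
    - rewrite tech5, IH. rewrite S_INR. pose proof (pos_INR N). field. lra. }
  assert (L : is_lim_seq (fun N => sum_f_R0 (fun n => / (INR n + 1) - / (INR n + 2)) N) 1).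
  2:{ apply (is_lim_seq_ext _ _ _ (fun n => eq_sym (sum_n_Reals _ n))) in L. exact L. }
  apply (is_lim_seq_ext (fun N => 1 - / (INR N + 2))).
  - intros N. symmetry. apply Hs.
  - replace (Finite 1) with (Finite (1 - 0)) by (f_equal; ring).
    apply is_lim_seq_minus'. apply is_lim_seq_const.
    apply is_lim_seq_ext with (fun N => / INR (N + 2)).
    + intros N. rewrite plus_INR. reflexivity.
    + apply (is_lim_seq_incr_n (fun n => / INR n) 2).
      replace (Finite 0) with (Rbar_inv p_infty) by reflexivity.
      apply is_lim_seq_inv. apply is_lim_seq_INR. discriminate.
Qed.

Lemma Lerch1_ex c : 0 < c -> ex_series (fun n => 1 ^ n / (INR n + c) ^ 2).
Proof.
  intros Hc. set (K := (1 + / c) * (1 + 2 / c)).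
  apply ex_series_le_R with (fun n => K * (/ (INR n + 1) - / (INR n + 2))).
  - intros n. pose proof (pos_INR n) as Hn. rewrite pow1.
    assert (Hci : 0 < / c) by (apply Rinv_0_lt_compat; lra).
    rewrite Rabs_pos_eq by (apply Rdiv_le_0_compat; [lra|]; apply pow_lt; lra).
    replace (/ (INR n + 1) - / (INR n + 2)) with (/ ((INR n + 1) * (INR n + 2))) by (field; lra).
    assert (H1 : INR n + 1 <= (INR n + c) * (1 + / c)).
    { replace ((INR n + c) * (1 + / c)) with (INR n + c + INR n * / c + 1) by (field; lra). nra. }
    assert (H2 : INR n + 2 <= (INR n + c) * (1 + 2 / c)).
    { replace ((INR n + c) * (1 + 2 / c)) with (INR n + c + 2 * (INR n * / c) + 2) by (field; lra). nra. }
    assert (H3 : (INR n + 1) * (INR n + 2) <= (INR n + c) ^ 2 * K).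
    { unfold K. replace ((INR n + c) ^ 2 * ((1 + / c) * (1 + 2 / c))) with
        (((INR n + c) * (1 + / c)) * ((INR n + c) * (1 + 2 / c))) by ring.
      apply Rmult_le_compat; lra. }
    unfold Rdiv. rewrite Rmult_1_l.
    apply Rmult_le_reg_r with ((INR n + 1) * (INR n + 2)). nra.
    rewrite Rmult_assoc, Rinv_l by nra. rewrite Rmult_1_r.
    apply Rmult_le_reg_l with ((INR n + c) ^ 2). apply pow_lt; lra.
    rewrite <- Rmult_assoc, Rinv_r by (apply pow_nonzero; lra). lra.
  - exists (K * 1). apply is_series_scal_R. exact tele_series.
Qed.

Lemma Lerch2_ex q c s : 0 < q < 1 -> 0 < c -> ex_series (fun n => q ^ n / (INR n + c) ^ s).
Proof.
  intros Hq Hc.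
  apply ex_series_le_R with (fun n => / c ^ s * q ^ n).
  - intros n. pose proof (pos_INR n).
    assert (Hp : c ^ s <= (INR n + c) ^ s) by (apply pow_incr; lra).
    assert (0 < c ^ s) by (apply pow_lt; lra).
    rewrite Rabs_pos_eq by (apply Rdiv_le_0_compat; [apply pow_le; lra|apply pow_lt; lra]).
    unfold Rdiv. rewrite Rmult_comm. apply Rmult_le_compat_r. apply pow_le; lra.
    apply Rinv_le_contravar; lra.
  - destruct (ex_series_geom q) as [l Hl]. rewrite Rabs_pos_eq; lra.
    exists (/ c ^ s * l). apply is_series_scal_R. exact Hl.
Qed.

Theorem mainTheorem5 (x y : R) (hx : 0 < x) (hy : 0 < y) (hxy : x * y < 2 * PI) :
  is_series (fun n : nat => Bernoulli n * Rrem n y * x ^ n)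
    (exp y / x * LerchPhi 1 2 (/ x)
     - y * LerchPhi (exp (- (x * y))) 1 (/ x)
     - / x * LerchPhi (exp (- (x * y))) 2 (/ x)
     + x * (y + 1 - exp y)).
Proof.
  set (W := exp y / x * LerchPhi 1 2 (/ x) - y * LerchPhi (exp (- (x * y))) 1 (/ x)
     - / x * LerchPhi (exp (- (x * y))) 2 (/ x)).
  assert (Hc : 0 < / x) by (apply Rinv_0_lt_compat; lra).
  assert (Hq : 0 < exp (- (x * y)) < 1).
  { split. apply exp_pos. rewrite <- exp_0. apply exp_increasing. nra. }
  assert (HW : is_series (Lm x y) W).
  { unfold W, Lm, LerchPhi.
    apply is_series_minus_R; [apply is_series_minus_R|]; apply is_series_scal_R; apply Series_correct.
    - apply Lerch1_ex; exact Hc.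
    - apply Lerch2_ex; assumption.
    - apply Lerch2_ex; assumption. }
  assert (HT : is_lim_seq (fun M => sum_f_R0 (fun m => Lm x y (S m)) M) (W - Lm x y 0)).
  { apply is_series_incr_1_R in HW. unfold is_series in HW.
    change (is_lim_seq (sum_n (fun n => Lm x y (S n))) (W - Lm x y 0)) in HW.
    apply (is_lim_seq_ext _ _ _ (sum_n_Reals _)) in HW. exact HW. }
  pose proof (T_lim x y hx hy hxy) as HT2.
  assert (E : RInt (fV x y) 0 y = W - Lm x y 0).
  { apply is_lim_seq_unique in HT. apply is_lim_seq_unique in HT2. rewrite HT in HT2.
    injection HT2. auto. }
  replace (W + x * (y + 1 - exp y)) with (RInt (fV x y) 0 y).
  - apply S_lim; assumption.
  - rewrite E. unfold Lm. simpl. field. lra.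
Qed.
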